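(* Let $m\ge1$ and $k\ge 1$ be integers, and let $q_k=\lfloor mk/(m+1)\rfloor$. There are unique real numbers $a_{k,0,m}$ and $a_{k,l,r}$ ($1\le l\le q_k$, $0\le r\le m$) such that, in $\mathbb{R}[x]$, $$\big((x-1)^{\underline m}\big)^k=a_{k,0,m}(x-1)^{\underline m}+\sum_{l=1}^{q_k}\sum_{r=0}^m a_{k,l,r}\big((x)^{\underline{m+1}}\big)^l(x+r-m-1)^{\underline r}.$$
   Context: Falling factorials are $(y)^{\underline 0}=1$ and $(y)^{\underline j}=y(y-1)\cdots(y-j+1)$ for $j\ge 1$. *)

(* Defs.v *)
From HB Require Import structures.
From mathcomp Require Import all_boot all_order all_algebra.
From mathcomp Require Import reals.
Set Implicit Arguments. Unset Strict Implicit. Unset Printing Implicit Defensive.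
Import Order.TTheory GRing.Theory Num.Theory.
Local Open Scope ring_scope.

Definition ffall (R : nzRingType) (y : {poly R}) (j : nat) : {poly R} :=
  \prod_(i < j) (y - (i%:R)%:P).

Definition rhs6p1 (R : nzRingType) (m k : nat) (a0 : R) (a : nat -> nat -> R)
  : {poly R} :=
  a0 *: ffall ('X - 1) m
  + \sum_(1 <= l < ((m * k) %/ m.+1).+1) \sum_(0 <= r < m.+1)
      a l r *: (ffall 'X m.+1 ^+ l * ffall ('X + (r%:R - (m.+1)%:R)%:P) r).

(* Main.v *)
Require Import Defs.
From HB Require Import structures.
From mathcomp Require Import all_boot all_order all_algebra.
From mathcomp Require Import reals.
From mathcomp Require Import zify ring.
Import Order.TTheory GRing.Theory Num.Theory.
Local Open Scope ring_scope.

Section Helpers.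
Variable R : numFieldType.

Lemma ffall_XsubC (c : R) j :
  ffall ('X + c%:P) j = \prod_(i < j) ('X - (i%:R - c)%:P).
Proof. by apply: eq_bigr => i _; rewrite polyCB opprB addrA addrAC. Qed.

Lemma ffall_monic (c : R) j : ffall ('X + c%:P) j \is monic.
Proof. by rewrite ffall_XsubC monic_prod_XsubC. Qed.

Lemma ffall_size (c : R) j : size (ffall ('X + c%:P) j) = j.+1.
Proof. by rewrite ffall_XsubC size_prod_XsubC; rewrite /index_enum; unlock; rewrite -enumT size_enum_ord. Qed.

Lemma span_monic (B : nat -> {poly R}) :
  (forall n, B n \is monic) -> (forall n, size (B n) = n.+1) ->
  forall N (Q : {poly R}), (size Q <= N)%N ->
  exists c : nat -> R, Q = \sum_(n < N) c n *: B n.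
Proof.
move=> Bm Bs; elim=> [|N IH] Q hQ.
  exists (fun=> 0); rewrite big_ord0; apply/eqP; rewrite -size_poly_eq0.
  by rewrite -leqn0.
have [|c hc] := IH (Q - Q`_N *: B N).
  apply/leq_sizeP => j hj; rewrite coefB coefZ.
  case: (ltngtP N j) => [hNj|hjN|<-].
  - have h1 : Q`_j = 0 by move/leq_sizeP: hQ; apply.
    have h2 : (B N)`_j = 0.
      by have := leqnn (size (B N)); rewrite {2}Bs => /leq_sizeP; apply.
    by rewrite h1 h2 mulr0 subr0.
  - by move: hj; rewrite leqNgt hjN.
  - have := monicP (Bm N); rewrite /lead_coef Bs /= => ->.
    by rewrite mulr1 subrr.
exists (fun n => if (n < N)%N then c n else Q`_N).
rewrite big_ord_recr /= ltnn.
under eq_bigr => i _ do rewrite ltn_ord.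
by rewrite -hc subrK.
Qed.

Lemma indep_monic (B : nat -> {poly R}) :
  (forall n, B n \is monic) -> (forall n, size (B n) = n.+1) ->
  forall N (c : nat -> R), \sum_(n < N) c n *: B n = 0 ->
  forall n, (n < N)%N -> c n = 0.
Proof.
move=> Bm Bs; elim=> [|N IH] c H n hn //.
have hN : (\sum_(i < N.+1) c i *: B i)`_N = c N.
  rewrite big_ord_recr /= coefD coefZ.
  have := monicP (Bm N); rewrite /lead_coef Bs /= => ->.
  rewrite mulr1 coef_sum big1 ?add0r // => i _.
  rewrite coefZ; have -> : (B i)`_N = 0.
    by have := leqnn (size (B i)); rewrite {2}Bs => /leq_sizeP; apply.
  by rewrite mulr0.
have cN : c N = 0 by rewrite -hN H coef0.
move: H; rewrite big_ord_recr /= cN scale0r addr0 => H.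
case: (ltngtP n N) => [hnN|hNn|->] //; first exact: IH.
by move: hn; rewrite ltnS leqNgt hNn.
Qed.

Lemma reindex (V : nmodType) (f : nat -> V) q M :
  \sum_(n < q * M) f n =
  \sum_(1 <= l < q.+1) \sum_(0 <= r < M) f ((l.-1) * M + r)%N.
Proof.
elim: q => [|q IH]; first by rewrite mul0n big_ord0 big_geq.
rewrite big_nat_recr //= -IH -!(big_mkord xpredT) mulSn addnC.
rewrite (big_cat_nat _ (n:=(q * M)%N)) ?leq_addr //=.
congr (_ + _).
rewrite -{1}(add0n (q * M)%N) big_addn addKn.
by apply: eq_bigr => i _; rewrite addnC.
Qed.

End Helpers.

Section Main.
Variable R : numFieldType.
Variable m : nat.

Let F : {poly R} := ffall 'X m.+1.
Let E : {poly R} := ffall ('X - 1) m.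
Let G (r : nat) : {poly R} := ffall ('X + (r%:R - (m.+1)%:R)%:P) r.
Let Bp (n : nat) : {poly R} := F ^+ (n %/ m.+1) * G (n %% m.+1).

Lemma F_monic : F \is monic.
Proof. by have := @ffall_monic R 0 m.+1; rewrite polyC0 addr0. Qed.

Lemma F_size : size F = m.+2.
Proof. by have := @ffall_size R 0 m.+1; rewrite polyC0 addr0. Qed.

Lemma E_eq : E = \prod_(i < m) ('X - (i.+1)%:R%:P).
Proof.
apply: eq_bigr => i _; rewrite -nat1r polyCD polyC1 opprD addrA //.
Qed.

Lemma E_monic : E \is monic.
Proof. by rewrite E_eq monic_prod_XsubC. Qed.

Lemma E_size : size E = m.+1.
Proof.
by have := @ffall_size R (-1) m; rewrite polyCN polyC1.
Qed.

Lemma F_eq : F = ('X - 0%:P) * E.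
Proof.
rewrite /F /ffall big_ord_recl /= E_eq.
congr (_ * _); apply: eq_bigr => i _ //.
Qed.

Lemma E0_neq0 : E.[0] != 0.
Proof.
rewrite E_eq horner_prod; apply/prodf_neq0 => i _.
by rewrite hornerXsubC sub0r oppr_eq0 pnatr_eq0.
Qed.

Lemma F0 : F.[0] = 0.
Proof. by rewrite F_eq hornerM hornerXsubC subrr mul0r. Qed.

Lemma Bp_monic n : Bp n \is monic.
Proof. by rewrite /Bp monicMl ?monic_exp ?F_monic // ffall_monic. Qed.

Lemma Bp_size n : size (Bp n) = n.+1.
Proof.
rewrite /Bp size_monicM ?monic_exp ?F_monic ?monic_neq0 ?ffall_monic //.
rewrite ffall_size.
have := size_exp F (n %/ m.+1); rewrite F_size /=.
have : (0 < size (F ^+ (n %/ m.+1)))%N.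
  by rewrite size_poly_gt0 monic_neq0 // monic_exp // F_monic.
move=> h1 h2.
rewrite {3}(divn_eq n m.+1) mulnC -h2.
clear h2; move: h1; move: (size _) => s. move: (n %% m.+1)%N => u. lia.
Qed.

Lemma key (q : nat) (b : nat -> nat -> R) :
  \sum_(1 <= l < q.+1) \sum_(0 <= r < m.+1) b l r *: (F ^+ l * G r) =
  F * \sum_(n < (q * m.+1)%N) b (n %/ m.+1)%N.+1 (n %% m.+1)%N *: Bp n.
Proof.
rewrite mulr_sumr (reindex _ (fun i => F * (b (i %/ m.+1)%N.+1 (i %% m.+1)%N *: Bp i))).
apply: eq_big_nat => l /andP[l1 _]; apply: eq_big_nat => r /andP[_ hr].
rewrite /Bp !divnMDl // !divn_small // !addn0 !modnMDl !modn_small // (prednK l1).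
by rewrite -scalerAr mulrA -exprS (prednK l1).
Qed.

End Main.

Theorem lemma6p1 (R : realType) (m k : nat) (hm : (1 <= m)%N) (hk : (1 <= k)%N) :
  exists (a0 : R) (a : nat -> nat -> R),
    ffall ('X - 1) m ^+ k = rhs6p1 m k a0 a /\
    forall (b0 : R) (b : nat -> nat -> R),
      ffall ('X - 1) m ^+ k = rhs6p1 m k b0 b ->
      b0 = a0 /\
      forall l r, (1 <= l <= (m * k) %/ m.+1)%N -> (r <= m)%N -> b l r = a l r.
Proof.
set q := ((m * k) %/ m.+1)%N.
set E : {poly R} := ffall ('X - 1) m.
set F : {poly R} := ffall 'X m.+1.
pose Bp (n : nat) : {poly R} := F ^+ (n %/ m.+1) *
   ffall ('X + ((n %% m.+1)%:R - (m.+1)%:R)%:P) (n %% m.+1).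
have rhsE : forall b0 b, rhs6p1 m k b0 b =
   b0 *: E + F * \sum_(n < (q * m.+1)%N) b (n %/ m.+1)%N.+1 (n %% m.+1)%N *: Bp n.
  by move=> b0 b; rewrite /rhs6p1 (key R m q b).
pose a0 := E.[0] ^+ k.-1.
have [T hT] : exists T, E ^+ k.-1 - a0%:P = T * ('X - 0%:P).
  apply/factor_theorem.
  by rewrite /root hornerD hornerN hornerC horner_exp subrr.
have PE : E ^+ k = a0 *: E + F * T.
  have -> : E ^+ k = E * E ^+ k.-1 by rewrite -exprS prednK.
  move/eqP: hT; rewrite subr_eq => /eqP ->.
  rewrite /F F_eq -/E -mul_polyC; ring.
have sT : (size T <= q * m.+1)%N.
  have [->|T0] := eqVneq T 0; first by rewrite size_poly0.
  have h1 : size (F * T) = (m.+2 + size T).-1.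
    by rewrite size_monicM ?F_monic // F_size.
  have h2 : (size (F * T)%R <= maxn (size (E ^+ k)) (size E))%N.
    have -> : F * T = E ^+ k + - (a0 *: E) by rewrite PE [a0 *: E + _]addrC addrK.
    apply: (leq_trans (size_polyD _ _)).
    by rewrite size_polyN geq_max leq_maxl (leq_trans (size_scale_leq _ _)) ?leq_maxr.
  have h3 := size_exp E k.
  have h4 : (0 < size (E ^+ k))%N.
    by rewrite size_poly_gt0 monic_neq0 // monic_exp // E_monic.
  have h5 := divn_eq (m * k) m.+1.
  have h6 := ltn_pmod (m * k) (ltn0Sn m).
  rewrite E_size /= in h2 h3.
  rewrite h1 in h2.
  rewrite -/q in h5.
  move: h1 h2 h3 h4 h5 h6; move: (size T) (size (E ^+ k)) ((m * k) %% m.+1)%N.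
  move=> s t u; nia.
have [c hc] := @span_monic R Bp (Bp_monic R m) (Bp_size R m) _ _ sT.
pose a l r := c (l.-1 * m.+1 + r)%N.
have Hex : E ^+ k = rhs6p1 m k a0 a.
  rewrite rhsE PE hc; congr (_ + F * _); apply: eq_bigr => n _.
  by rewrite /a succnK -divn_eq.
exists a0, a; split => // b0 b Hb.
have H := Hb; rewrite Hex !rhsE in H.
have hb0 : b0 = a0.
  move: (congr1 (horner^~ 0) H).
  by rewrite !hornerD !hornerZ !hornerM F0 !mul0r !addr0 => /(mulIf (E0_neq0 R m)) ->.
split => // l r /andP[l1 lq] rm.
move: H; rewrite hb0 => /addrI /(mulfI (monic_neq0 (F_monic R m))) H.
have H0 : \sum_(n < (q * m.+1)%N)
    (b (n %/ m.+1)%N.+1 (n %% m.+1)%N - a (n %/ m.+1)%N.+1 (n %% m.+1)%N) *: Bp n = 0.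
  under eq_bigr => n _ do rewrite scalerBl.
  by rewrite sumrB H subrr.
have hn : (l.-1 * m.+1 + r < q * m.+1)%N.
  move: l1 lq rm; rewrite -/q => l1 lq rm.
  have : (l.-1 < q)%N by lia.
  move=> h; nia.
have := @indep_monic R Bp (Bp_monic R m) (Bp_size R m) _ (fun n => b (n %/ m.+1)%N.+1 (n %% m.+1)%N - a (n %/ m.+1)%N.+1 (n %% m.+1)%N) H0 _ hn.
move=> /=.
rewrite !divnMDl // !divn_small ?ltnS // !addn0 !modnMDl !modn_small ?ltnS //.
by rewrite (prednK l1) => /eqP; rewrite subr_eq0 => /eqP.
Qed.
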